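(* Let $G$ be a finite soluble group, $N$ a minimal normal subgroup of $G$, $x\in G\setminus\{1\}$ with $\mathrm d(x,N)>3$ in $\Gamma(G)$, and $y\in\langle x\rangle$ of prime order. Then $C_G(y)N$ is a Frobenius group with Frobenius complement $C_G(y)$, and $|C_G(y)|$ is odd.
   Context: For a group $G$, the normalising graph $\Gamma(G)$ has vertex set $G\setminus\{1\}$, and two distinct vertices $x,y$ are adjacent if and only if $\langle x\rangle$ normalises $\langle y\rangle$ or $\langle y\rangle$ normalises $\langle x\rangle$. $\mathrm d$ is graph distance (infinite if there is no path), and $\mathrm d(x,N)=\min\{\mathrm d(x,n):n\in N\setminus\{1\}\}$. *)

(* Defs.v *)
From mathcomp Require Import all_boot all_fingroup all_solvable.
Set Implicit Arguments. Unset Strict Implicit. Unset Printing Implicit Defensive.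
Local Open Scope group_scope.

Definition norm_adj (gT : finGroupType) (G : {set gT}) : rel gT :=
  fun x y => [&& x \in G^#, y \in G^#, x != y &
     (<[x]> \subset 'N(<[y]>)) || (<[y]> \subset 'N(<[x]>))].

Definition norm_dist_le (gT : finGroupType) (G : {set gT}) (k : nat) (x y : gT) :=
  x \in G^# /\ y \in G^# /\
  exists p : seq gT, size p <= k /\ path (norm_adj G) x p /\ last x p = y.

(* d(x,N) > k, where d(x,N) = min { d(x,n) : n in N \ {1} } (infinite distance
   allowed). *)
Definition norm_dist_set_gt (gT : finGroupType) (G N : {set gT}) (k : nat) (x : gT) :=
  forall n, n \in N^# -> ~ norm_dist_le G k x n.

(* Main.v *)
Require Import Defs.
From mathcomp Require Import all_boot all_fingroup all_solvable.
Local Open Scope group_scope.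
Set Warnings "-notation-overridden".
Set Implicit Arguments. Unset Strict Implicit.

Section S.
Variables (gT : finGroupType) (G : {group gT}).

Definition wadj (v w : gT) := [&& v \in G^#, w \in G^# &
   (<[v]> \subset 'N(<[w]>)) || (<[w]> \subset 'N(<[v]>))].

Lemma dist_refl u : u \in G^# -> norm_dist_le G 0 u u.
Proof. by move=> Hu; split=> //; split=> //; exists [::]. Qed.

Lemma dist_step k u v w : norm_dist_le G k u v -> wadj v w -> norm_dist_le G k.+1 u w.
Proof.
move=> [Hu [Hv [p [sp [pp lp]]]]] /and3P[_ Hw Hn].
split=> //; split=> //.
have [<-|nvw] := eqVneq v w.
  by exists p; split=> //; apply: leqW.
exists (rcons p w); split; first by rewrite size_rcons.
rewrite rcons_path pp lp last_rcons; split=> //.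
by rewrite /norm_adj Hv Hw nvw Hn.
Qed.

Lemma wadj_cent v w : v \in G^# -> w \in G^# -> v \in 'C[w] -> wadj w v.
Proof.
move=> Hv Hw c; rewrite /wadj Hv Hw /=; apply/orP; right; rewrite cycle_subG.
by rewrite (subsetP (cent_sub _)) // cent_cycle.
Qed.

End S.

Theorem mainTheorem10 (gT : finGroupType) (G N : {group gT}) (x y : gT) :
  solvable G ->
  N <| G -> minnormal N G ->
  x \in G^# ->
  norm_dist_set_gt G N 3 x ->
  y \in <[x]> -> prime #[y] ->
  [Frobenius ('C_G[y] * N) with complement 'C_G[y]] /\ odd #|'C_G[y]|.
Proof.
move=> _ nNG mN Gx dx yx py.
set H := 'C_G[y].
have sNG := normal_sub nNG.
have [ntN _] := andP (mingroupp mN).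
have Gx' : x \in G by case/setD1P: Gx.
have Gy : y \in G^#.
  rewrite !inE (subsetP _ _ yx) ?cycle_subG // andbT.
  by apply: contraTneq py => ->; rewrite order1.
have d1 : norm_dist_le G 1 x y.
  apply: (dist_step (dist_refl Gx)); rewrite /wadj Gx Gy /=.
  by apply/orP; right; apply: subset_trans (normG _); rewrite cycle_subG.
have sHG : H \subset G by apply: subsetIl.
have key : forall c n, c \in H^# -> n \in N^# -> c \in 'N(<[n]>) -> False.
  move=> c n Hc Nn cn.
  have Gc : c \in G^#.
    by case/setD1P: Hc => nc Hc; rewrite !inE nc (subsetP sHG).
  have Gn : n \in G^#.
    by case/setD1P: Nn => nn Nn; rewrite !inE nn (subsetP sNG).
  have cy : c \in 'C[y] by case/setD1P: Hc => _ /setIP[].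
  have d2 := dist_step d1 (wadj_cent Gc Gy cy).
  have d3 : norm_dist_le G 3 x n.
    apply: (dist_step d2); rewrite /wadj Gc Gn /= cycle_subG cn //.
  exact: dx Nn d3.
have tiNH : N :&: H = 1.
  apply/trivgP; apply/subsetP => c /setIP[Nc Hc]; rewrite inE.
  apply/negPn/negP => nt.
  apply: (key c c); first by rewrite in_setD1 nt.
    by rewrite in_setD1 nt.
  by rewrite (subsetP (normG _)) // cycle_id.
have regNH : semiregular N H.
  move=> c Hc; apply/trivgP; apply/subsetP => n /setIP[Nn cn]; rewrite inE.
  apply/negPn/negP => nt.
  apply: (key c n Hc); first by rewrite in_setD1 nt.
  rewrite (subsetP (cent_sub _)) // cent_cycle cent1C //.
have nNH : H \subset 'N(N) := subset_trans sHG (normal_norm nNG).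
have Hy : y \in H by case/setD1P: Gy => _ Gy; rewrite inE Gy cent1id.
have ntH : H :!=: 1.
  apply/trivgPn; exists y => //; by case/setD1P: Gy.
have sd : N ><| H = N <*> H by rewrite sdprodE // norm_joinEr.
have frob := Frobenius_semiregularP sd ntN ntH.
split.
  have := FrobeniusWcompl (introT frob regNH).
  by rewrite /= norm_joinEr // (normC nNH).
apply/negPn/negP => evH.
have dH : 2 %| #|H| by rewrite dvdn2.
have [t Ht ot] := Cauchy (isT : prime 2) dH.
have ntt : t != 1 by apply/eqP => t1; move: ot; rewrite t1 order1.
have Ht' : t \in H^# by rewrite in_setD1 ntt.
have tt : t * t = 1 by rewrite -(expg_order t) ot expgS expg1.
have Gt : t \in G by rewrite (subsetP sHG).
have nNt : t \in 'N(N) by rewrite (subsetP (normal_norm nNG)).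
have regt : 'C_N[t] = 1 := regNH t Ht'.
have [n Nn ntn] := trivgPn _ ntN.
pose f := fun m => m^-1 * m ^ t.
have injf : {in N &, injective f}.
  move=> a b Na Nb; rewrite /f => eq; apply/eqP; rewrite eq_mulgV1.
  have : a * b^-1 \in 'C_N[t].
    rewrite inE groupM ?groupV //= (sameP cent1P commgP); apply/conjg_fixP.
    have e : a ^ t = a * (b^-1 * b ^ t) by rewrite -eq mulKVg.
    by rewrite conjMg conjVg e -mulgA mulgK.
  by rewrite regt inE.
have imf : f @: N = N.
  apply/eqP; rewrite eqEcard card_in_imset // leqnn andbT.
  apply/subsetP => _ /imsetP[m Nm ->].
  by rewrite /f groupM ?groupV // memJ_norm.
have : n \in f @: N by rewrite imf.
case/imsetP=> m Nm nE.
have inv : n ^ t = n^-1.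
  by rewrite nE /f conjMg conjVg -conjgM tt conjg1 [RHS]invMg invgK.
apply: (key t n Ht'); first by rewrite in_setD1 ntn.
by apply/normP; rewrite -cycleJ inv cycleV.
Qed.
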